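(* Let $P$ be a finite path producible by a tile assembly system $\mathcal T=(T,\sigma,1)$ such that the last tile of $P$ is the unique easternmost tile of $\sigma\cup\mathrm{asm}(P)$. Then either (a) all glues of $P$ that are visible from the north point east, or (b) all glues of $P$ that are visible from the south point east.
   Context: aTAM at temperature 1: $T$ finite set of tile types; tiles $((x,y),t)\in\mathbb Z^2\times T$; adjacent tiles interact if abutting glues have equal type and strength $\ge1$; $\mathcal T=(T,\sigma,1)$ with finite connected seed $\sigma$; producible assemblies grow from $\sigma$ by single tile additions interacting with an existing tile. A path is a sequence $P=P_0P_1\dots$ of tiles with pairwise distinct positions, consecutive ones adjacent and interacting; $\mathrm{asm}(P)$ is the set of its tiles. $P$ is producible if its tiles avoid the positions of $\sigma$, $\sigma\cup\mathrm{asm}(P)$ is producible, and $P_0$ interacts with a tile of $\sigma$. ''Easternmost'' means largest $x$-coordinate. $\mathrm{glue}_P(a)$ ($0\le a\le|P|-2$) is the glue between $P_a,P_{a+1}$, with position the midpoint of the segment $\mathrm{pos}(P_a)\mathrm{pos}(P_{a+1})$ and direction east/west/north/south according to $\mathrm{pos}(P_{a+1})-\mathrm{pos}(P_a)$ being $(1,0),(-1,0),(0,1),(0,-1)$. $\mathrm{emb}(P)$ is the polygonal curve through the positions of $P$. A glue pointing east or west is visible from the south (resp. north) if the vertical ray from its position downward (resp. upward) meets neither $\mathrm{emb}(P)$ nor $\sigma$ (tile positions or unit segments between adjacent positions of $\sigma$); only east- or west-pointing glues can be visible from the north or south. *)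

(* Defs.v *)
From Stdlib Require Import ZArith Reals List Relations.
Open Scope Z_scope.

Inductive dir := North | East | South | West.

Definition dvec (d : dir) : Z * Z :=
  match d with
  | North => (0, 1) | East => (1, 0) | South => (0, -1) | West => (-1, 0)
  end.

Definition opp (d : dir) : dir :=
  match d with North => South | East => West | South => North | West => East end.

Definition pos := (Z * Z)%type.
Definition padd (p q : pos) : pos := (fst p + fst q, snd p + snd q).

(** A glue is a pair (label, strength); a tile type assigns a glue to each side. *)
Definition glue := (nat * nat)%type.
Record ttype := { tglue : dir -> glue }.

Definition tile := (pos * ttype)%type.
Definition tpos (t : tile) : pos := fst t.
Definition ttyp (t : tile) : ttype := snd t.

Definition interacts (a b : tile) : Prop :=
  exists d, tpos b = padd (tpos a) (dvec d)
         /\ tglue (ttyp a) d = tglue (ttyp b) (opp d)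
         /\ (1 <= snd (tglue (ttyp a) d))%nat.

Definition assembly := pos -> option ttype.

Definition pos_eq_dec (p q : pos) : {p = q} + {p <> q}.
Proof. decide equality; apply Z.eq_dec. Defined.

Definition upd (a : assembly) (p : pos) (t : ttype) : assembly :=
  fun q => if pos_eq_dec q p then Some t else a q.

Definition in_asm (a : assembly) (t : tile) : Prop := a (tpos t) = Some (ttyp t).

Definition over (T : list ttype) (a : assembly) : Prop :=
  forall p t, a p = Some t -> In t T.

Definition finite_asm (a : assembly) : Prop :=
  exists l : list pos, forall p, a p <> None -> In p l.

Definition adjacent (p q : pos) : Prop := exists d, q = padd p (dvec d).

Definition grid_connected (a : assembly) : Prop :=
  forall p q, a p <> None -> a q <> None ->
    clos_refl_trans pos (fun u v => a u <> None /\ a v <> None /\ adjacent u v) p q.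

Definition valid_seed (T : list ttype) (sigma : assembly) : Prop :=
  over T sigma /\ finite_asm sigma /\ grid_connected sigma.

(** Single-tile additions at temperature 1. *)
Inductive produced (T : list ttype) (sigma : assembly) : assembly -> Prop :=
| produced_seed : produced T sigma sigma
| produced_step : forall a p t,
    produced T sigma a -> a p = None -> In t T ->
    (exists u, in_asm a u /\ interacts (p, t) u) ->
    produced T sigma (upd a p t).

(** Producible assemblies (assemblies are compared extensionally). *)
Definition producible (T : list ttype) (sigma a : assembly) : Prop :=
  exists b, produced T sigma b /\ forall p, a p = b p.

Definition dflt_tile : tile := ((0, 0), {| tglue := fun _ => (0%nat, 0%nat) |}).
Definition tileAt (P : list tile) (i : nat) : tile := nth i P dflt_tile.

Definition is_path (T : list ttype) (P : list tile) : Prop :=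
  (forall t, In t P -> In (ttyp t) T)
  /\ NoDup (map tpos P)
  /\ (forall i, (S i < length P)%nat -> interacts (tileAt P i) (tileAt P (S i))).

(** The union sigma ∪ asm(P) (the tiles of P lie outside sigma). *)
Fixpoint asm_of (P : list tile) : assembly :=
  match P with
  | nil => fun _ => None
  | t :: P' => fun q => if pos_eq_dec q (tpos t) then Some (ttyp t) else asm_of P' q
  end.

Definition union_asm (sigma : assembly) (P : list tile) : assembly :=
  fun q => match sigma q with Some t => Some t | None => asm_of P q end.

Definition producible_path (T : list ttype) (sigma : assembly) (P : list tile) : Prop :=
  is_path T P
  /\ (forall t, In t P -> sigma (tpos t) = None)
  /\ producible T sigma (union_asm sigma P)
  /\ (exists P0 rest, P = P0 :: rest /\ exists u, in_asm sigma u /\ interacts P0 u).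

Open Scope R_scope.

Definition point := (R * R)%type.
Definition rpt (p : pos) : point := (IZR (fst p), IZR (snd p)).

Definition on_seg (p q : pos) (z : point) : Prop :=
  exists s, 0 <= s <= 1
    /\ fst z = IZR (fst p) + s * (IZR (fst q) - IZR (fst p))
    /\ snd z = IZR (snd p) + s * (IZR (snd q) - IZR (snd p)).

Definition in_emb (P : list tile) (z : point) : Prop :=
  (exists t, In t P /\ z = rpt (tpos t))
  \/ (exists i, (S i < length P)%nat /\ on_seg (tpos (tileAt P i)) (tpos (tileAt P (S i))) z).

Definition in_seed_geom (sigma : assembly) (z : point) : Prop :=
  (exists p, sigma p <> None /\ z = rpt p)
  \/ (exists p q, sigma p <> None /\ sigma q <> None /\ adjacent p q /\ on_seg p q z).

Definition glue_dir (P : list tile) (a : nat) (d : dir) : Prop :=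
  (S a < length P)%nat /\ tpos (tileAt P (S a)) = padd (tpos (tileAt P a)) (dvec d).

Definition glue_pt (P : list tile) (a : nat) : point :=
  ((IZR (fst (tpos (tileAt P a))) + IZR (fst (tpos (tileAt P (S a))))) / 2,
   (IZR (snd (tpos (tileAt P a))) + IZR (snd (tpos (tileAt P (S a))))) / 2).

Definition horizontal (d : dir) : Prop := d = East \/ d = West.

Definition visible_south (sigma : assembly) (P : list tile) (a : nat) : Prop :=
  (exists d, glue_dir P a d /\ horizontal d)
  /\ forall s, 0 < s ->
       let z := (fst (glue_pt P a), snd (glue_pt P a) - s) in
       ~ in_emb P z /\ ~ in_seed_geom sigma z.

Definition visible_north (sigma : assembly) (P : list tile) (a : nat) : Prop :=
  (exists d, glue_dir P a d /\ horizontal d)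
  /\ forall s, 0 < s ->
       let z := (fst (glue_pt P a), snd (glue_pt P a) + s) in
       ~ in_emb P z /\ ~ in_seed_geom sigma z.

Close Scope R_scope.

Definition last_unique_easternmost (sigma : assembly) (P : list tile) : Prop :=
  exists lt rest, P = rest ++ lt :: nil /\
    forall q, union_asm sigma P q <> None -> q <> tpos lt ->
      (fst q < fst (tpos lt))%Z.

(* Main.v *)
Require Import Defs.
From Stdlib Require Import ZArith Reals List Relations Lia Lra Classical.
Open Scope Z_scope.

Ltac zdestr := repeat match goal with
 | |- context [Z.eqb ?a ?b] => destruct (Z.eqb_spec a b)
 | |- context [Z.ltb ?a ?b] => destruct (Z.ltb_spec a b)
 | |- context [Z.leb ?a ?b] => destruct (Z.leb_spec a b)
 end.

Definition phi (a b p : Defs.pos) : bool :=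
  ((snd a =? snd b) && (Z.min (fst a) (fst b) =? fst p) && (snd p <? snd a)).
Definition col (a p : Defs.pos) : bool := ((fst a =? fst p + 1) && (snd p <? snd a)).
Definition cr (a b : Defs.pos) (c : Z) : bool := xorb (fst a <=? c) (fst b <=? c).
Fixpoint bx (f : nat -> bool) (lo n : nat) : bool :=
  match n with O => false | S n' => xorb (f lo) (bx f (S lo) n') end.

Lemma bx_ext f g lo n : (forall e, (lo <= e < lo + n)%nat -> f e = g e) -> bx f lo n = bx g lo n.
Proof.
  revert lo; induction n; intros lo H; simpl; auto.
  rewrite H by lia. rewrite IHn; auto. intros; apply H; lia.
Qed.

Lemma bx_false f lo n : (forall e, (lo <= e < lo + n)%nat -> f e = false) -> bx f lo n = false.
Proof.
  revert lo; induction n; intros lo H; simpl; auto.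
  rewrite H by lia. rewrite IHn; auto. intros; apply H; lia.
Qed.

Lemma bx_cr (q : nat -> Defs.pos) c lo n :
  bx (fun e => cr (q e) (q (S e)) c) lo n = xorb (fst (q lo) <=? c) (fst (q (lo+n)%nat) <=? c).
Proof.
  revert lo; induction n; intros lo; simpl.
  - rewrite Nat.add_0_r. destruct (_ <=? _); reflexivity.
  - rewrite IHn. replace (S lo + n)%nat with (lo + S n)%nat by lia. unfold cr.
    destruct (fst (q lo) <=? c), (fst (q (S lo)) <=? c), (fst (q (lo + S n)%nat) <=? c); reflexivity.
Qed.

Lemma neq_pair (a b c d : Z) : (a,b) <> (c,d) -> ~(a = c /\ b = d).
Proof. intros H [-> ->]; apply H; reflexivity. Qed.

Ltac prep := repeat match goal with
  | H : (_,_) <> (_,_) |- _ => apply neq_pair in H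
  end.

Lemma edge_h a b p p' : adjacent a b -> p' = (fst p + 1, snd p) -> a <> p' -> b <> p' ->
  xorb (phi a b p) (phi a b p') = xorb (col a p) (col b p).
Proof.
  intros [d ->] -> H1 H2. destruct a as [ax ay], p as [px py].
  destruct d; unfold phi, col, padd in *; simpl in *; prep; zdestr; simpl;
  first [reflexivity | exfalso; lia].
Qed.

Lemma edge_v a b p p' : adjacent a b -> p' = (fst p, snd p + 1) -> a <> p' -> b <> p' ->
  phi a b p = phi a b p'.
Proof.
  intros [d ->] -> H1 H2. destruct a as [ax ay], p as [px py].
  destruct d; unfold phi, col, padd in *; simpl in *; prep; zdestr; simpl;
  first [reflexivity | exfalso; lia].
Qed.

Lemma edge_c a b p : adjacent a b ->
  (snd a = snd b -> Z.min (fst a) (fst b) = fst p -> snd p <= snd a) -> a <> p -> b <> p ->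
  phi a b p = cr a b (fst p).
Proof.
  intros [d ->] H H1 H2. destruct a as [ax ay], p as [px py].
  destruct d; unfold phi, cr, padd in *; simpl in *; prep; zdestr; simpl;
  first [reflexivity | exfalso; lia].
Qed.

Lemma edge_c0 a b k Y : adjacent a b ->
  (snd a = snd b -> Z.min (fst a) (fst b) = k -> snd a = Y) -> a <> (k+1, Y) -> b <> (k+1,Y) ->
  cr a b k = false.
Proof.
  intros [d ->] H H1 H2. destruct a as [ax ay].
  destruct d; unfold cr, padd in *; simpl in *; prep; zdestr; simpl;
  first [reflexivity | exfalso; lia].
Qed.

Lemma F_h (q : nat -> Defs.pos) lo n p p' :
  (forall e, (lo <= e < lo + n)%nat -> adjacent (q e) (q (S e))) ->
  p' = (fst p + 1, snd p) ->
  (forall e, (lo <= e <= lo + n)%nat -> q e <> p') ->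
  xorb (bx (fun e => phi (q e) (q (S e)) p) lo n) (bx (fun e => phi (q e) (q (S e)) p') lo n)
  = xorb (col (q lo) p) (col (q (lo + n)%nat) p).
Proof.
  intros Ha Hp Hn. revert lo Ha Hn; induction n; intros lo Ha Hn; simpl.
  - rewrite Nat.add_0_r. destruct (col _ _); reflexivity.
  - pose proof (IHn (S lo)) as IH.
    pose proof (edge_h (q lo) (q (S lo)) p p') as E.
    replace (S lo + n)%nat with (lo + S n)%nat in IH by lia.
    assert (E1 : xorb (phi (q lo) (q (S lo)) p) (phi (q lo) (q (S lo)) p') = xorb (col (q lo) p) (col (q (S lo)) p)).
    { apply E; auto. apply Ha; lia. apply Hn; lia. apply Hn; lia. }
    assert (E2 := IH ltac:(intros; apply Ha; lia) ltac:(intros; apply Hn; lia)).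
    revert E1 E2.
    destruct (phi (q lo) (q (S lo)) p), (phi (q lo) (q (S lo)) p'),
        (bx (fun e => phi (q e) (q (S e)) p) (S lo) n),
        (bx (fun e => phi (q e) (q (S e)) p') (S lo) n), (col (q lo) p), (col (q (S lo)) p),
        (col (q (lo + S n)%nat) p); simpl; congruence.
Qed.

Lemma F_v (q : nat -> Defs.pos) lo n p p' :
  (forall e, (lo <= e < lo + n)%nat -> adjacent (q e) (q (S e))) ->
  p' = (fst p, snd p + 1) ->
  (forall e, (lo <= e <= lo + n)%nat -> q e <> p') ->
  bx (fun e => phi (q e) (q (S e)) p) lo n = bx (fun e => phi (q e) (q (S e)) p') lo n.
Proof.
  intros Ha Hp Hn. apply bx_ext. intros e He. apply edge_v; [apply Ha; lia | exact Hp | apply Hn; lia | apply Hn; lia].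
Qed.

Lemma xorb_solve a b c : xorb a b = c -> b = xorb a c.
Proof. destruct a, b, c; simpl; congruence. Qed.

Lemma core (q : nat -> Defs.pos) (n i j : nat) :
  (forall a b, (a < n)%nat -> (b < n)%nat -> q a = q b -> a = b) ->
  (forall e, (S e < n)%nat -> adjacent (q e) (q (S e))) ->
  (i < j)%nat -> (S j < n)%nat ->
  q (S i) = (fst (q i) - 1, snd (q i)) ->
  q (S j) = (fst (q j) - 1, snd (q j)) ->
  (forall e, (S e < n)%nat -> snd (q e) = snd (q (S e)) ->
     Z.min (fst (q e)) (fst (q (S e))) = fst (q (S i)) -> snd (q e) <= snd (q i)) ->
  (forall e, (S e < n)%nat -> snd (q e) = snd (q (S e)) ->
     Z.min (fst (q e)) (fst (q (S e))) = fst (q (S j)) -> snd (q j) <= snd (q e)) ->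
  (forall e, (S e < n)%nat -> fst (q e) < fst (q (n-1)%nat)) ->
  False.
Proof.
  intros Hinj Hadj Hij Hjn Hi Hj HA HB Hl.
  destruct (q i) as [xi yi] eqn:Eqi. destruct (q j) as [xj yj] eqn:Eqj.
  simpl in Hi, Hj, HA, HB.
  rewrite Hi in HA. rewrite Hj in HB. simpl in HA, HB.
  pose (F := fun p => bx (fun e => phi (q e) (q (S e)) p) (S i) (j - S i)).
  pose (g := fun p : Defs.pos => xorb (xorb (F p) ((fst p =? xi - 1) && (snd p <? yi))) (xi - 1 + 1 <=? fst p)).
  assert (Hw : forall e, (S j <= e)%nat -> (S e < n)%nat -> g (q e) = g (q (S e))).
  { intros e H1 H2.
    assert (NS : forall v, (S i <= v <= j)%nat -> q v <> q e /\ q v <> q (S e)).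
    { intros v Hv; split; intro E; apply Hinj in E; lia. }
    assert (Ha' : forall e', (S i <= e' < S i + (j - S i))%nat -> adjacent (q e') (q (S e'))).
    { intros; apply Hadj; lia. }
    pose proof (HA e H2) as HAe. pose proof (HB e H2) as HBe.
    assert (NSi : q (S i) <> q e /\ q (S i) <> q (S e)) by (apply NS; lia).
    rewrite Hi in NSi.
    destruct (Hadj e H2) as [d Hd].
    destruct (q e) as [x y] eqn:Ee. rewrite Hd in *. clear Hd.
    destruct d; unfold padd in *; simpl in *; destruct NSi as [N1 N2]; prep.
    -
      assert (FV : F (x,y) = F (x + 0, y + 1)).
      { unfold F; apply F_v; auto. simpl; f_equal; lia.
        intros v Hv. replace (S i + (j - S i))%nat with j in Hv by lia. apply NS; auto. }
      unfold g; rewrite FV. simpl. zdestr; destruct (F (x+0, y+1)); simpl; first [reflexivity | exfalso; lia].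
    -
      assert (FH := F_h q (S i) (j - S i) (x,y) (x+1, y+0) Ha'
                     ltac:(simpl; f_equal; lia)
                     ltac:(intros v Hv; replace (S i + (j - S i))%nat with j in Hv by lia; apply NS; auto)).
      replace (S i + (j - S i))%nat with j in FH by lia.
      rewrite Hi, Eqj in FH. apply xorb_solve in FH.
      unfold g. change (bx (fun e0 : nat => phi (q e0) (q (S e0)) (x+1,y+0)) (S i) (j - S i)) with (F (x+1,y+0)) in FH.
      change (bx (fun e0 : nat => phi (q e0) (q (S e0)) (x,y)) (S i) (j - S i)) with (F (x,y)) in FH.
      rewrite FH. unfold col; simpl. zdestr; destruct (F (x, y)); simpl;
        first [reflexivity | exfalso; lia].
    -
      assert (FV : F (x + 0, y + -1) = F (x, y)).
      { unfold F; apply F_v; auto. simpl; f_equal; lia.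
        intros v Hv. replace (S i + (j - S i))%nat with j in Hv by lia. apply NS; auto. }
      unfold g; rewrite <- FV. simpl. zdestr; destruct (F (x+0, y + -1)); simpl;
        first [reflexivity | exfalso; lia].
    -
      assert (FH := F_h q (S i) (j - S i) (x + -1, y + 0) (x,y) Ha'
                     ltac:(simpl; f_equal; lia)
                     ltac:(intros v Hv; replace (S i + (j - S i))%nat with j in Hv by lia; apply NS; auto)).
      replace (S i + (j - S i))%nat with j in FH by lia.
      rewrite Hi, Eqj in FH. apply xorb_solve in FH.
      unfold g. change (bx (fun e0 : nat => phi (q e0) (q (S e0)) (x,y)) (S i) (j - S i)) with (F (x,y)) in FH.
      change (bx (fun e0 : nat => phi (q e0) (q (S e0)) (x + -1,y+0)) (S i) (j - S i)) with (F (x + -1,y+0)) in FH.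
      rewrite FH. unfold col; simpl. zdestr; destruct (F (x + -1, y + 0)); simpl;
        first [reflexivity | exfalso; lia].
  }
  assert (Hch : forall t, (S j + t <= n - 1)%nat -> g (q (S j)) = g (q (S j + t)%nat)).
  { induction t; intros Ht.
    - rewrite Nat.add_0_r; reflexivity.
    - rewrite IHt by lia. replace (S j + S t)%nat with (S (S j + t)) by lia. apply Hw; lia. }
  specialize (Hch (n - 1 - S j)%nat ltac:(lia)).
  replace (S j + (n - 1 - S j))%nat with (n-1)%nat in Hch by lia.
  assert (GL : g (q (n-1)%nat) = true).
  { assert (Hk : xi - 1 < fst (q (n-1)%nat)).
    { pose proof (Hl (S i) ltac:(lia)) as H. rewrite Hi in H. exact H. }
    assert (FL : F (q (n-1)%nat) = false).
    { unfold F. apply bx_false. intros e He.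
      pose proof (Hl e ltac:(lia)). unfold phi. zdestr; simpl; first [reflexivity | exfalso; lia]. }
    unfold g. rewrite FL. zdestr; simpl; first [reflexivity | exfalso; lia]. }
  assert (G0 : g (q (S j)) = false).
  { assert (Fm : F (q (S j)) = bx (fun e => cr (q e) (q (S e)) (xj - 1)) (S i) (j - S i)).
    { unfold F. apply bx_ext. intros e He. rewrite Hj.
      assert (N1 : q e <> (xj - 1, yj)) by (rewrite <- Hj; intro E; apply Hinj in E; lia).
      assert (N2 : q (S e) <> (xj - 1, yj)) by (rewrite <- Hj; intro E; apply Hinj in E; lia).
      rewrite (edge_c (q e) (q (S e)) (xj - 1, yj)); auto. apply Hadj; lia.
      simpl. intros. apply HB; auto; lia. }
    rewrite bx_cr in Fm. replace (S i + (j - S i))%nat with j in Fm by lia.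
    rewrite Hi, Eqj in Fm. simpl in Fm.
    pose proof (HA j Hjn) as HAj. rewrite Eqj, Hj in HAj. simpl in HAj.
    assert (Nij : q j <> q i) by (intro E; apply Hinj in E; lia).
    rewrite Eqi, Eqj in Nij. prep.
    unfold g. rewrite Fm, Hj. simpl. zdestr; simpl; first [reflexivity | exfalso; lia]. }
  rewrite <- Hch, G0 in GL. discriminate.
Qed.

Lemma core0 (q : nat -> Defs.pos) (n i : nat) :
  (forall a b, (a < n)%nat -> (b < n)%nat -> q a = q b -> a = b) ->
  (forall e, (S e < n)%nat -> adjacent (q e) (q (S e))) ->
  (S i < n)%nat ->
  q (S i) = (fst (q i) - 1, snd (q i)) ->
  (forall e, (S e < n)%nat -> snd (q e) = snd (q (S e)) ->
     Z.min (fst (q e)) (fst (q (S e))) = fst (q (S i)) -> snd (q e) <= snd (q i)) ->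
  (forall e, (S e < n)%nat -> snd (q e) = snd (q (S e)) ->
     Z.min (fst (q e)) (fst (q (S e))) = fst (q (S i)) -> snd (q i) <= snd (q e)) ->
  (forall e, (S e < n)%nat -> fst (q e) < fst (q (n-1)%nat)) ->
  False.
Proof.
  intros Hinj Hadj Hin Hi HA HB Hl.
  destruct (q i) as [xi yi] eqn:Eqi. simpl in Hi, HA, HB. rewrite Hi in HA, HB. simpl in HA, HB.
  assert (Hk : xi - 1 < fst (q (n-1)%nat)).
  { destruct (Nat.eq_dec (S i) (n-1)) as [E|E].
    - pose proof (Hl i Hin) as H. rewrite Eqi, <- E, Hi in H. simpl in H. lia.
    - pose proof (Hl (S i) ltac:(lia)) as H. rewrite Hi in H. exact H. }
  pose proof (bx_cr q (xi - 1) (S i) (n - 1 - S i)) as C.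
  replace (S i + (n - 1 - S i))%nat with (n-1)%nat in C by lia.
  rewrite Hi in C. simpl in C.
  rewrite bx_false in C.
  - revert C. zdestr; simpl; first [discriminate | lia].
  - intros e He. apply (edge_c0 _ _ _ yi). apply Hadj; lia.
    intros E1 E2. pose proof (HA e ltac:(lia) E1 E2). pose proof (HB e ltac:(lia) E1 E2). lia.
    replace (xi - 1 + 1) with xi by lia. rewrite <- Eqi. intro E; apply Hinj in E; lia.
    replace (xi - 1 + 1) with xi by lia. rewrite <- Eqi. intro E; apply Hinj in E; lia.
Qed.

Lemma asm_of_in P t : In t P -> asm_of P (tpos t) <> None.
Proof.
  induction P as [|a P IH]; simpl; [tauto|].
  intros [E|H]; destruct (pos_eq_dec (tpos t) (tpos a)); try congruence; auto.
Qed.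

Lemma inj_P P : NoDup (map tpos P) -> forall a b, (a < length P)%nat -> (b < length P)%nat ->
  tpos (tileAt P a) = tpos (tileAt P b) -> a = b.
Proof.
  intros H a b Ha Hb E. pose proof (proj1 (NoDup_nth (map tpos P) (tpos dflt_tile)) H) as H0; clear H; rename H0 into H.
  apply H; rewrite ?length_map; auto. rewrite !map_nth. exact E.
Qed.

Lemma last_P sigma P : last_unique_easternmost sigma P ->
  (forall t, In t P -> sigma (tpos t) = None) -> NoDup (map tpos P) ->
  forall e, (S e < length P)%nat ->
  fst (tpos (tileAt P e)) < fst (tpos (tileAt P (length P - 1)%nat)).
Proof.
  intros [lt [rest [HP Hq]]] Hs Hnd e He.
  assert (HL : tileAt P (length P - 1)%nat = lt).
  { rewrite HP. unfold tileAt. rewrite length_app. simpl.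
    replace (length rest + 1 - 1)%nat with (length rest) by lia. apply nth_middle. }
  rewrite HL. apply Hq.
  - unfold union_asm. assert (Hin : In (tileAt P e) P) by (apply nth_In; lia).
    rewrite (Hs _ Hin). apply asm_of_in; auto.
  - rewrite <- HL. intro E. apply inj_P in E; auto; lia.
Qed.

Lemma emb_edge P e z : (S e < length P)%nat ->
  adjacent (tpos (tileAt P e)) (tpos (tileAt P (S e))) ->
  snd (tpos (tileAt P e)) = snd (tpos (tileAt P (S e))) ->
  fst z = (IZR (Z.min (fst (tpos (tileAt P e))) (fst (tpos (tileAt P (S e))))) + /2)%R ->
  snd z = IZR (snd (tpos (tileAt P e))) -> in_emb P z.
Proof.
  intros He [d Hd] Hy Hz1 Hz2. right. exists e. split; auto.
  exists (/2)%R. split; [lra|].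
  destruct (tpos (tileAt P e)) as [ax ay], (tpos (tileAt P (S e))) as [bx by_].
  destruct z as [zx zy]. unfold padd in Hd. simpl in *.
  injection Hd as E1 E2. subst bx by_.
  destruct d; simpl in *; try lia.
  - rewrite Z.min_l in Hz1 by lia. rewrite !plus_IZR in *. split; lra.
  - rewrite Z.min_r in Hz1 by lia. rewrite !plus_IZR in *. split; lra.
Qed.

Lemma glue_west P a : glue_dir P a West ->
  (S a < length P)%nat /\
  tpos (tileAt P (S a)) = (fst (tpos (tileAt P a)) - 1, snd (tpos (tileAt P a))).
Proof.
  intros [H1 H2]. split; auto. rewrite H2. unfold padd; simpl. f_equal; lia.
Qed.

Definition padj (P : list tile) := forall e, (S e < length P)%nat ->
  adjacent (tpos (tileAt P e)) (tpos (tileAt P (S e))).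

Lemma vis_N sigma P a : padj P -> visible_north sigma P a -> glue_dir P a West ->
  forall e, (S e < length P)%nat ->
  snd (tpos (tileAt P e)) = snd (tpos (tileAt P (S e))) ->
  Z.min (fst (tpos (tileAt P e))) (fst (tpos (tileAt P (S e)))) = fst (tpos (tileAt P (S a))) ->
  snd (tpos (tileAt P e)) <= snd (tpos (tileAt P a)).
Proof.
  intros Hadj [_ Hv] Hg e He Hy Hm. destruct (glue_west P a Hg) as [Ha Hw].
  destruct (Z_le_gt_dec (snd (tpos (tileAt P e))) (snd (tpos (tileAt P a)))) as [|Hgt]; auto.
  exfalso.
  specialize (Hv (IZR (snd (tpos (tileAt P e)) - snd (tpos (tileAt P a)))) ltac:(apply IZR_lt; lia)).
  cbv zeta in Hv. destruct Hv as [Hv _]. apply Hv.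
  apply (emb_edge P e); auto.
  - unfold glue_pt; simpl. rewrite Hm, Hw. simpl. rewrite minus_IZR. lra.
  - unfold glue_pt; simpl. rewrite Hw; simpl. rewrite minus_IZR. lra.
Qed.

Lemma vis_S sigma P a : padj P -> visible_south sigma P a -> glue_dir P a West ->
  forall e, (S e < length P)%nat ->
  snd (tpos (tileAt P e)) = snd (tpos (tileAt P (S e))) ->
  Z.min (fst (tpos (tileAt P e))) (fst (tpos (tileAt P (S e)))) = fst (tpos (tileAt P (S a))) ->
  snd (tpos (tileAt P a)) <= snd (tpos (tileAt P e)).
Proof.
  intros Hadj [_ Hv] Hg e He Hy Hm. destruct (glue_west P a Hg) as [Ha Hw].
  destruct (Z_le_gt_dec (snd (tpos (tileAt P a))) (snd (tpos (tileAt P e)))) as [|Hgt]; auto.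
  exfalso.
  specialize (Hv (IZR (snd (tpos (tileAt P a)) - snd (tpos (tileAt P e)))) ltac:(apply IZR_lt; lia)).
  cbv zeta in Hv. destruct Hv as [Hv _]. apply Hv.
  apply (emb_edge P e); auto.
  - unfold glue_pt; simpl. rewrite Hm, Hw. simpl. rewrite minus_IZR. lra.
  - unfold glue_pt; simpl. rewrite Hw; simpl. rewrite minus_IZR. lra.
Qed.

Lemma dvec_inj d1 d2 : dvec d1 = dvec d2 -> d1 = d2.
Proof. destruct d1, d2; simpl; intro H; inversion H; reflexivity. Qed.

Lemma west_of P a d : glue_dir P a d -> d <> East ->
  (exists d', glue_dir P a d' /\ horizontal d') -> d = West.
Proof.
  intros [_ H1] Hne [d' [[_ H2] Hh]].
  rewrite H1 in H2. destruct (tpos (tileAt P a)). unfold padd in H2. simpl in H2.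
  assert (dvec d = dvec d').
  { injection H2 as E1 E2. destruct (dvec d), (dvec d'); simpl in *; f_equal; lia. }
  apply dvec_inj in H. subst. destruct Hh; subst; congruence.
Qed.

Definition rfl (p : Defs.pos) : Defs.pos := (fst p, - snd p).

Lemma adj_rfl a b : adjacent a b -> adjacent (rfl a) (rfl b).
Proof.
  intros [d ->]. destruct a as [x y]. unfold rfl, padd; simpl.
  destruct d; [exists South|exists East|exists North|exists West]; unfold padd; simpl; f_equal; lia.
Qed.

Theorem mainTheorem7 :
  forall (T : list ttype) (sigma : assembly) (P : list tile),
    valid_seed T sigma ->
    producible_path T sigma P ->
    last_unique_easternmost sigma P ->
    (forall a d, glue_dir P a d -> visible_north sigma P a -> d = East)
    \/ (forall a d, glue_dir P a d -> visible_south sigma P a -> d = East).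
Proof.
  intros T sigma P Hseed Hpp Hlast.
  destruct (classic (forall a d, glue_dir P a d -> visible_north sigma P a -> d = East)) as [H|H];
    [left; exact H | right].
  intros a2 d2 Hg2 Hv2. destruct (classic (d2 = East)) as [|Hne2]; auto. exfalso.
  apply H. intros a1 d1 Hg1 Hv1. destruct (classic (d1 = East)) as [|Hne1]; auto. exfalso.
  assert (W1 : d1 = West) by (eapply west_of; eauto; apply Hv1).
  assert (W2 : d2 = West) by (eapply west_of; eauto; apply Hv2).
  subst d1 d2.
  destruct Hpp as [[HT [Hnd Hint]] [Hs _]].
  assert (Hadj : padj P).
  { intros e He. destruct (Hint e He) as [d [Hd _]]. exists d. exact Hd. }
  assert (Hinj := inj_P P Hnd).
  assert (Hl := last_P sigma P Hlast Hs Hnd).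
  destruct (glue_west P a1 Hg1) as [Ha1 Hw1].
  destruct (glue_west P a2 Hg2) as [Ha2 Hw2].
  pose proof (vis_N sigma P a1 Hadj Hv1 Hg1) as HN.
  pose proof (vis_S sigma P a2 Hadj Hv2 Hg2) as HS.
  destruct (lt_eq_lt_dec a1 a2) as [[Hlt|Heq]|Hgt].
  - apply (core (fun e => tpos (tileAt P e)) (length P) a1 a2); auto.
  - subst a2. apply (core0 (fun e => tpos (tileAt P e)) (length P) a1); auto.
  - apply (core (fun e => rfl (tpos (tileAt P e))) (length P) a2 a1); auto;
      unfold rfl; simpl.
    + intros a b Ha Hb E. apply Hinj; auto.
      destruct (tpos (tileAt P a)), (tpos (tileAt P b)); simpl in E.
      injection E as E1 E2. f_equal; lia.
    + intros e He. exact (adj_rfl _ _ (Hadj e He)).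
    + rewrite Hw2; reflexivity.
    + rewrite Hw1; reflexivity.
    + intros e He E1 E2. specialize (HS e He ltac:(lia) E2). lia.
    + intros e He E1 E2. specialize (HN e He ltac:(lia) E2). lia.
Qed.
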